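(* Let $\mathcal{E}=[\theta,u]$ be an interval effect algebra with an order-determining set of states $\mathcal{S}(\mathcal{E})$. For $a,b\in\mathcal{E}$ and $\beta\in\mathcal{S}(\mathcal{E})$ define $a[\beta]b=\beta(b)a\in\mathcal{E}$. Then for all $a,b,c\in\mathcal{E}$ and $\alpha,\beta\in\mathcal{S}(\mathcal{E})$: (i) the maps $b\mapsto a[\beta]b$ and $a\mapsto a[\beta]b$ preserve convex combinations and are additive (e.g. $a[\beta](b+c)=a[\beta]b+a[\beta]c$ whenever $b+c\le u$, and $(a+c)[\beta]b=a[\beta]b+c[\beta]b$ whenever $a+c\le u$); (ii) $\theta[\beta]b=b[\beta]\theta=\theta$; (iii) $a[\beta]u=a$, $u[\beta]b=\beta(b)u$, and $u[\beta]b=b$ if and only if $b=\lambda u$ for some $\lambda\in[0,1]$; (iv) $a[\beta]b\le a$; (v) $a[\alpha](b[\beta]c)=(a[\alpha]b)[\beta]c$; (vi) $a[\alpha]b=\theta$ does not in general imply $b[\alpha]a=\theta$: there exist such an $\mathcal{E}$, a state $\alpha$, and $a,b\in\mathcal{E}$ with $a[\alpha]b=\theta$ but $b[\alpha]a\ne\theta$.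
   Context: Let $V$ be a real vector space with zero $\theta$ and $K\subseteq V$ a positive cone ($\mathbb{R}^+K\subseteq K$, $K+K\subseteq K$, $K\cap(-K)=\{\theta\}$), ordered by $x\le y$ iff $y-x\in K$. For $u\in K$, $u\ne\theta$, the interval effect algebra is $\mathcal{E}=[\theta,u]=\{x\in K:x\le u\}$; $a\perp b$ means $a+b\le u$. A state is $s\colon\mathcal{E}\to[0,1]$ with $s(u)=1$ and $s(a+b)=s(a)+s(b)$ when $a\perp b$; $\mathcal{S}(\mathcal{E})$ is the set of all states, assumed order-determining ($a\le b$ iff $s(a)\le s(b)$ for all states $s$). *)

(* Defs.v *)
From HB Require Import structures.
From mathcomp Require Import all_boot all_order all_algebra.
From mathcomp Require Import reals.
Set Implicit Arguments. Unset Strict Implicit. Unset Printing Implicit Defensive.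
Import Order.TTheory GRing.Theory Num.Theory.
Local Open Scope ring_scope.

Section IEA.
Variables (R : realType) (V : lmodType R).

Definition positive_cone (K : V -> Prop) : Prop :=
  [/\ (forall (r : R) x, 0 <= r -> K x -> K (r *: x)),
      (forall x y, K x -> K y -> K (x + y)),
      K 0 &
      (forall x, K x -> K (- x) -> x = 0)].

Definition cle (K : V -> Prop) (x y : V) : Prop := K (y - x).

Definition in_eff (K : V -> Prop) (u x : V) : Prop := K x /\ cle K x u.

(* states on [θ,u]; represented by functions V -> R, only their values on
   [θ,u] matter *)
Definition is_state (K : V -> Prop) (u : V) (s : V -> R) : Prop :=
  [/\ (forall x, in_eff K u x -> 0 <= s x <= 1),
      s u = 1 &
      (forall a b, in_eff K u a -> in_eff K u b -> cle K (a + b) u ->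
         s (a + b) = s a + s b)].

Definition order_determining (K : V -> Prop) (u : V) : Prop :=
  forall a b, in_eff K u a -> in_eff K u b ->
    (cle K a b <-> forall s, is_state K u s -> s a <= s b).

Definition interval_effect_algebra (K : V -> Prop) (u : V) : Prop :=
  [/\ positive_cone K, K u, u <> 0 & order_determining K u].

Definition sprod (a : V) (beta : V -> R) (b : V) : V := beta b *: a.

End IEA.

(* Main.v *)
Require Import Defs.
From HB Require Import structures.
From mathcomp Require Import all_boot all_order all_algebra.
From mathcomp Require Import reals.
From mathcomp Require Import ring lra.
Import Order.TTheory GRing.Theory Num.Theory.
Local Open Scope ring_scope.
Set Implicit Arguments. Unset Strict Implicit.

Section Gen.
Variables (R : realType) (V : lmodType R) (K : V -> Prop) (u : V).
Hypothesis HK : positive_cone K.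
Hypothesis Ku : K u.

Lemma Kscale r x : 0 <= r -> K x -> K (r *: x).
Proof. by case: HK => h _ _ _; apply: h. Qed.
Lemma Kadd x y : K x -> K y -> K (x + y).
Proof. by case: HK => _ h _ _; apply: h. Qed.
Lemma K0 : K 0.
Proof. by case: HK. Qed.

Lemma eff0 : in_eff K u 0.
Proof. split; first exact: K0. by rewrite /cle subr0. Qed.

Lemma effu : in_eff K u u.
Proof. split => //. rewrite /cle subrr; exact: K0. Qed.

Lemma eff_scale t x : 0 <= t <= 1 -> in_eff K u x -> in_eff K u (t *: x).
Proof.
move=> /andP[t0 t1] [Kx Hx]; split; first exact: Kscale.
rewrite /cle; rewrite /cle in Hx.
have -> : u - t *: x = (u - x) + (1 - t) *: x.
  by rewrite scalerBl scale1r addrA subrK.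
apply: Kadd => //; apply: Kscale => //; lra.
Qed.

Variable s : V -> R.
Hypothesis Hs : is_state K u s.

Lemma st_bnd x : in_eff K u x -> 0 <= s x <= 1.
Proof. by case: Hs => h _ _; apply: h. Qed.

Lemma st_add a b : in_eff K u a -> in_eff K u b -> cle K (a + b) u ->
         s (a + b) = s a + s b.
Proof. by case: Hs => _ _ h; apply: h. Qed.

Lemma st_u : s u = 1.
Proof. by case: Hs. Qed.

Lemma st0 : s 0 = 0.
Proof.
have := st_add eff0 eff0; rewrite addr0 => h.
have /h : cle K 0 u by rewrite /cle subr0.
move=> e; lra.
Qed.

Lemma st_addscale x t1 t2 : in_eff K u x -> 0 <= t1 -> 0 <= t2 -> t1 + t2 <= 1 ->
  s ((t1 + t2) *: x) = s (t1 *: x) + s (t2 *: x).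
Proof.
move=> Ex h1 h2 h12; rewrite scalerDl; apply: st_add.
- apply: eff_scale => //; apply/andP; split; lra.
- apply: eff_scale => //; apply/andP; split; lra.
- rewrite -scalerDl; case: (@eff_scale (t1 + t2) x) => //; apply/andP; split; lra.
Qed.

Lemma st_mono x t1 t2 : in_eff K u x -> 0 <= t1 -> t1 <= t2 -> t2 <= 1 ->
  s (t1 *: x) <= s (t2 *: x).
Proof.
move=> Ex h1 h2 h3.
have -> : t2 = t1 + (t2 - t1) by ring.
rewrite st_addscale //; try lra.
have hh : 0 <= t2 - t1 <= 1 by apply/andP; split; lra.
have /andP[? _] := @st_bnd ((t2 - t1) *: x) (@eff_scale _ x hh Ex).
lra.
Qed.

Lemma st_nat x n : in_eff K u x -> forall j, (j <= n.+1)%N ->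
  s ((j%:R / n.+1%:R) *: x) = j%:R * s ((n.+1%:R)^-1 *: x).
Proof.
move=> Ex; elim=> [|j IH] hj.
  by rewrite mul0r scale0r st0 mul0r.
have hn : 0 < n.+1%:R :> R by rewrite ltr0n.
have hjn : j.+1%:R <= n.+1%:R :> R by rewrite ler_nat.
have e : j.+1%:R / n.+1%:R = j%:R / n.+1%:R + (n.+1%:R)^-1 :> R.
  by rewrite -natr1 mulrDl mul1r.
rewrite e st_addscale //.
- by rewrite IH ?(ltnW hj) // -[j.+1]addn1 natrD mulrDl mul1r.
- by rewrite divr_ge0 // ler0n.
- by rewrite invr_ge0 ltW.
- by rewrite -e ler_pdivrMr // mul1r.
Qed.

Lemma st_rat x n j : in_eff K u x -> (j <= n.+1)%N ->
  s ((j%:R / n.+1%:R) *: x) = (j%:R / n.+1%:R) * s x.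
Proof.
move=> Ex hj.
have hn : n.+1%:R != 0 :> R by rewrite pnatr_eq0.
have := @st_nat x n Ex n.+1 (leqnn _); rewrite divff // scale1r => ->.
rewrite st_nat // mulrA divfK //.
Qed.

Lemma small_le0 (d : R) : (forall n : nat, d <= (n.+1%:R)^-1) -> d <= 0.
Proof.
move=> H; rewrite leNgt; apply/negP => d0.
have h0 : 0 <= d^-1 by rewrite invr_ge0 ltW.
have /andP[_ hlt] := truncn_itv h0.
have := H (Num.truncn d^-1).
set m := (Num.truncn d^-1).+1%:R : R.
have m0 : 0 < m by rewrite /m ltr0n.
rewrite -[m^-1]mul1r ler_pdivlMr // => hd.
have : d * d^-1 < d * m by rewrite ltr_pM2l.
rewrite divff ?gt_eqF //; lra.
Qed.

Lemma st_hom x l : in_eff K u x -> 0 <= l <= 1 -> s (l *: x) = l * s x.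
Proof.
move=> Ex /andP[l0 l1].
have /andP[sx0 sx1] := @st_bnd x Ex.
have lo : forall n : nat, l * s x - s (l *: x) <= (n.+1%:R)^-1.
  move=> n; set N := n.+1%:R : R.
  have N0 : 0 < N by rewrite /N ltr0n.
  have hy : 0 <= l * N by rewrite mulr_ge0 // ltW.
  have /andP[ka kb] := truncn_itv hy.
  set k := Num.truncn (l * N) in ka kb.
  have kn : (k <= n.+1)%N.
    by rewrite -(ler_nat R); apply: le_trans ka _; rewrite -[X in _ <= X]mul1r ler_pM2r.
  have q1 : k%:R / N <= l by rewrite ler_pdivrMr.
  have q0 : 0 <= k%:R / N by rewrite divr_ge0 ?ler0n // ltW.
  have q2 : l - k%:R / N <= N^-1.
    have a1 : l <= k.+1%:R / N by rewrite ler_pdivlMr // ltW.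
    have a2 : k.+1%:R / N = k%:R / N + N^-1 by rewrite -[k.+1]addn1 natrD mulrDl mul1r.
    move: a1 a2; generalize (k.+1%:R / N) (k%:R / N) (N^-1) => ? ? ? ? ?; lra.
  have := @st_mono x (k%:R / N) l Ex q0 q1 l1.
  rewrite st_rat // -/N => hm.
  have : (l - k%:R / N) * s x <= N^-1.
    apply: le_trans (ler_wpM2r sx0 q2) _; apply: ler_piMr => //; rewrite invr_ge0 ltW //.
  rewrite mulrBl => e1; apply: le_trans e1; by rewrite lerD2l lerN2.
have hi : forall n : nat, s (l *: x) - l * s x <= (n.+1%:R)^-1.
  move=> n; set N := n.+1%:R : R.
  have N0 : 0 < N by rewrite /N ltr0n.
  have hy : 0 <= l * N by rewrite mulr_ge0 // ltW.
  have /andP[ka kb] := truncn_itv hy.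
  set k := Num.truncn (l * N) in ka kb.
  have Ni : 0 < N^-1 by rewrite invr_gt0.
  case: (ltnP k n.+1) => kn.
    have q1 : l <= k.+1%:R / N by rewrite ler_pdivlMr // ltW.
    have q3 : k.+1%:R / N <= 1 by rewrite ler_pdivrMr // mul1r ler_nat.
    have q2 : k.+1%:R / N - l <= N^-1.
      have a1 : k%:R / N <= l by rewrite ler_pdivrMr.
      have a2 : k.+1%:R / N = k%:R / N + N^-1 by rewrite -[k.+1]addn1 natrD mulrDl mul1r.
      move: a1 a2; generalize (k.+1%:R / N) (k%:R / N) (N^-1) => ? ? ? ? ?; lra.
    have := @st_mono x l (k.+1%:R / N) Ex l0 q1 q3.
    rewrite st_rat // -/N => hm.
    have : (k.+1%:R / N - l) * s x <= N^-1.
      apply: le_trans (ler_wpM2r sx0 q2) _; apply: ler_piMr => //; rewrite invr_ge0 ltW //.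
    rewrite mulrBl => e1; apply: le_trans e1; by rewrite lerD2r.
  have : N <= l * N by apply: le_trans ka; rewrite /N ler_nat.
  rewrite -[X in X <= _]mul1r ler_pM2r // => l1'.
  have -> : l = 1 by lra.
  by rewrite scale1r mul1r subrr ltW.
have := small_le0 lo; have := small_le0 hi; lra.
Qed.

Lemma od_fwd a b : in_eff K u a -> in_eff K u b -> cle K a b -> s a <= s b.
Proof.
move=> Ea [Kb Hb] hab.
have Ed : in_eff K u (b - a).
  split => //; rewrite /cle.
  have -> : u - (b - a) = (u - b) + a by rewrite opprB addrCA addrC.
  by apply: Kadd => //; case: Ea.
have e : a + (b - a) = b by rewrite addrC subrK.
have := st_add Ea Ed; rewrite e => /(_ Hb) ->.
have /andP[? _] := st_bnd Ed; lra.
Qed.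
End Gen.

Section Ex.
Variable R : realType.
Definition P := (R^o * R^o)%type.
Lemma p1D (x y : P) : (x + y).1 = (x.1 + y.1 : R). Proof. by []. Qed.
Lemma p1B (x y : P) : (x - y).1 = (x.1 - y.1 : R). Proof. by []. Qed.
Lemma p1Z (r : R) (x : P) : (r *: x).1 = (r * x.1 : R). Proof. by []. Qed.
Lemma p2D (x y : P) : (x + y).2 = (x.2 + y.2 : R). Proof. by []. Qed.
Lemma p2B (x y : P) : (x - y).2 = (x.2 - y.2 : R). Proof. by []. Qed.
Lemma p2Z (r : R) (x : P) : (r *: x).2 = (r * x.2 : R). Proof. by []. Qed.
Lemma p1N (x : P) : (- x).1 = (- x.1 : R). Proof. by []. Qed.
Lemma p2N (x : P) : (- x).2 = (- x.2 : R). Proof. by []. Qed.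
Lemma p0 : (0 : P) = (0, 0). Proof. by []. Qed.

Definition PK (x : P) : Prop := (0 : R) <= x.1 /\ (0 : R) <= x.2.
Definition Pu : P := (1, 1).

Lemma PK_cone : positive_cone PK.
Proof.
split.
- by move=> r x r0 [h1 h2]; split; rewrite ?p1Z ?p2Z mulr_ge0.
- by move=> x y [h1 h2] [h3 h4]; split; rewrite ?p1D ?p2D addr_ge0.
- by split.
- case=> x1 x2 [/= h1 h2]; rewrite /PK p1N p2N /= !oppr_ge0 => -[h3 h4].
  rewrite p0; congr pair; apply/eqP; rewrite eq_le; apply/andP; split => //.
Qed.

Lemma PKu : PK Pu.
Proof. by split; rewrite /= ler01. Qed.

Lemma Pu0 : Pu <> 0.
Proof. by rewrite p0 => -[] /eqP; rewrite oner_eq0. Qed.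

Lemma eff_bnd (x : P) : in_eff PK Pu x -> 0 <= x.1 <= 1 /\ 0 <= x.2 <= 1.
Proof.
move=> [[h1 h2] []]; rewrite p1B p2B /= !subr_ge0 => h3 h4.
by split; apply/andP.
Qed.

Lemma st1 : is_state PK Pu (fun x : P => x.1).
Proof.
split => //.
- by move=> x /eff_bnd [].
Qed.

Lemma st2 : is_state PK Pu (fun x : P => x.2).
Proof.
split => //.
- by move=> x /eff_bnd [].
Qed.

Lemma P_iea : interval_effect_algebra PK Pu.
Proof.
split.
- exact: PK_cone.
- exact: PKu.
- exact: Pu0.
- move=> a b Ea Eb; split.
    move=> h s Hs; exact: (od_fwd PK_cone Hs Ea Eb h).
  move=> H; have h1 := H _ st1; have h2 := H _ st2.
  by split; rewrite ?p1B ?p2B subr_ge0.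
Qed.
End Ex.

Theorem lemma4p2 (R : realType) :
  (forall (V : lmodType R) (K : V -> Prop) (u : V),
   interval_effect_algebra K u ->
   forall (a b c : V) (alpha beta : V -> R),
   in_eff K u a -> in_eff K u b -> in_eff K u c ->
   is_state K u alpha -> is_state K u beta ->
   (* a[β]b ∈ E *)
   in_eff K u (sprod a beta b) /\
   (* (i) convexity and additivity in each argument *)
   (forall l : R, 0 <= l <= 1 ->
      sprod a beta (l *: b + (1 - l) *: c)
        = l *: sprod a beta b + (1 - l) *: sprod a beta c) /\
   (forall l : R, 0 <= l <= 1 ->
      sprod (l *: a + (1 - l) *: c) beta b
        = l *: sprod a beta b + (1 - l) *: sprod c beta b) /\
   (cle K (b + c) u -> sprod a beta (b + c) = sprod a beta b + sprod a beta c) /\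
   (cle K (a + c) u -> sprod (a + c) beta b = sprod a beta b + sprod c beta b) /\
   (* (ii) *)
   (sprod 0 beta b = 0 /\ sprod b beta 0 = 0) /\
   (* (iii) *)
   (sprod a beta u = a /\ sprod u beta b = beta b *: u /\
    (sprod u beta b = b <-> exists l : R, 0 <= l <= 1 /\ b = l *: u)) /\
   (* (iv) *)
   cle K (sprod a beta b) a /\
   (* (v) *)
   sprod a alpha (sprod b beta c) = sprod (sprod a alpha b) beta c)
  /\
  (* (vi) a[α]b = θ does not in general imply b[α]a = θ *)
  (exists (V : lmodType R) (K : V -> Prop) (u : V) (alpha : V -> R) (a b : V),
     interval_effect_algebra K u /\ is_state K u alpha /\
     in_eff K u a /\ in_eff K u b /\
     sprod a alpha b = 0 /\ sprod b alpha a <> 0).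
Proof.
split.
  move=> V K u [HK Ku u0 Hod] a b c alpha beta Ea Eb Ec Ha Hb.
  have bb := st_bnd Hb Eb.
  rewrite /sprod.
  split. have := eff_scale HK bb Ea. by move=> h.
  split.
    move=> l hl.
    have hl' : 0 <= 1 - l <= 1 by case/andP: hl => ? ?; apply/andP; split; lra.
    have Elb := eff_scale HK hl Eb.
    have Elc := eff_scale HK hl' Ec.
    rewrite (st_add Hb Elb Elc).
      by rewrite (st_hom HK Ku Hb Eb hl) (st_hom HK Ku Hb Ec hl') !scalerA -scalerDl.
    rewrite /cle.
    have -> : u - (l *: b + (1 - l) *: c) = l *: (u - b) + (1 - l) *: (u - c).
      have e1 : l + (1 - l) = 1 by ring.
      by rewrite !scalerBr addrACA -scalerDl e1 scale1r opprD.
    case: Eb => _ Hb'; case: Ec => _ Hc'; case/andP: hl => ? ?; case/andP: hl' => ? ?.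
    by apply: (Kadd HK); apply: (Kscale HK).
  split.
    by move=> l hl; rewrite scalerDr !scalerA mulrC [(1 - l) * _]mulrC.
  split.
    by move=> h; rewrite (st_add Hb Eb Ec h) scalerDl.
  split.
    by move=> h; rewrite scalerDr.
  split.
    by rewrite scaler0 (st0 HK Ku Hb) scale0r.
  split.
    split; first by rewrite (st_u Hb) scale1r.
    split => //.
    split.
      by move=> <-; exists (beta b).
    case=> l [hl ->]; by rewrite (st_hom HK Ku Hb (effu HK Ku) hl) (st_u Hb) mulr1.
  split.
    rewrite /cle.
    have -> : a - beta b *: a = (1 - beta b) *: a by rewrite scalerBl scale1r.
    case/andP: bb => ? ?; apply: (Kscale HK); [lra | by case: Ea].
  have cc := st_bnd Hb Ec.
  by rewrite (st_hom HK Ku Ha Eb cc) scalerA mulrC.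
exists (P R), (@PK R), (@Pu R), (fun x : P R => x.1), (1, 0), (0, 1).
split; first exact: P_iea.
split; first exact: st1.
split.
  split; first by split; rewrite /= ?ler01.
  by rewrite /cle /PK p1B p2B /= subrr subr0 ler01.
split.
  split; first by split; rewrite /= ?ler01.
  by rewrite /cle /PK p1B p2B /= subrr subr0 ler01.
split; first by rewrite /sprod /= scale0r.
rewrite /sprod /= scale1r p0 => -[] /eqP; by rewrite oner_eq0.
Qed.
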